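(* Let $p$ be a lattice norm on $\mathbb{R}^2$ with $p((1,0))=1$ which is strictly increasing on the half-line $\{(1,u):u\in[0,\infty)\}$ (i.e. $0\le u<u'$ implies $p((1,u))<p((1,u'))$), and let $\Phi$ be a strictly convex Orlicz function. Assume that for every $x\in L^\Phi(\mu)\setminus\{0\}$ there exists $l\in(0,\infty)$ with $\|x\|_{\Phi,p}=\frac1l p((1,I_\Phi(lx)))$. Then $(L^\Phi(\mu),\|\cdot\|_{\Phi,p})$ is strictly convex.
   Context: $(\Omega,\Sigma,\mu)$ is a $\sigma$-finite complete measure space, $L^0$ the space of (classes of a.e. equal) real measurable functions. An Orlicz function is a function $\Phi:\mathbb{R}\to[0,\infty)$ which is convex, even, vanishes at $0$ and is not identically zero. $I_\Phi(x)=\int_\Omega\Phi(x(t))\,d\mu\in[0,+\infty]$; $L^\Phi(\mu)=\{x\in L^0: I_\Phi(\lambda x)<\infty\text{ for some }\lambda>0\}$. A lattice norm on $\mathbb{R}^2$ is a norm $p$ with $p((u,v))\le p((u',v'))$ whenever $|u|\le|u'|,|v|\le|v'|$; $\|x\|_{\Phi,p}=\inf_{k>0}\frac1k p((1,I_\Phi(kx)))$ with the convention $p((1,+\infty))=+\infty$. A normed space is strictly convex if $\|x\|=\|y\|=1$, $x\ne y$ imply $\|(x+y)/2\|<1$. *)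

(* Defs.v *)
From HB Require Import structures.
From mathcomp Require Import all_boot all_order all_algebra.
From mathcomp Require Import all_classical all_reals all_analysis.
Set Implicit Arguments. Unset Strict Implicit. Unset Printing Implicit Defensive.
Import Order.TTheory GRing.Theory Num.Theory.
Local Open Scope classical_set_scope.
Local Open Scope ring_scope.

Definition orlicz_function (R : realType) (Phi : R -> R) : Prop :=
  [/\ (forall s, 0 <= Phi s),
      (forall a b (t : R), 0 <= t <= 1 -> Phi (t * a + (1 - t) * b) <= t * Phi a + (1 - t) * Phi b),
      (forall s, Phi (- s) = Phi s),
      Phi 0 = 0 &
      exists s, Phi s != 0].

Definition strictly_convex_fun (R : realType) (Phi : R -> R) : Prop :=
  forall a b (t : R), a != b -> 0 < t < 1 ->
    Phi (t * a + (1 - t) * b) < t * Phi a + (1 - t) * Phi b.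

Definition lattice_norm (R : realType) (p : R * R -> R) : Prop :=
  [/\ (forall z, p z = 0 -> z = (0, 0)),
      (forall (a : R) z, p (a * z.1, a * z.2) = `|a| * p z),
      (forall z w, p (z.1 + w.1, z.2 + w.2) <= p z + p w) &
      (forall u v u' v', `|u| <= `|u'| -> `|v| <= `|v'| -> p (u, v) <= p (u', v'))].

(* p((1,u)) extended with the convention p((1,+oo)) = +oo *)
Definition p1E (R : realType) (p : R * R -> R) (u : \bar R) : \bar R :=
  match u with
  | r%:E => (p (1, r))%:E
  | _ => +oo%E
  end.

Definition I_Phi d (T : measurableType d) (R : realType)
  (mu : {measure set T -> \bar R}) (Phi : R -> R) (x : T -> R) : \bar R :=
  (\int[mu]_t (Phi (x t))%:E)%E.

Definition in_LPhi d (T : measurableType d) (R : realType)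
  (mu : {measure set T -> \bar R}) (Phi : R -> R) (x : T -> R) : Prop :=
  measurable_fun setT x /\
  exists lam : R, 0 < lam /\ (I_Phi mu Phi (fun t => (lam * x t)%R) < +oo)%E.

Definition norm_Phi_p d (T : measurableType d) (R : realType)
  (mu : {measure set T -> \bar R}) (Phi : R -> R) (p : R * R -> R) (x : T -> R) : \bar R :=
  ereal_inf [set ((k^-1)%:E * p1E p (I_Phi mu Phi (fun t => (k * x t)%R)))%E | k in [set k : R | 0 < k]].

(* Main.v *)
Require Import Defs.
From HB Require Import structures.
From mathcomp Require Import all_boot all_order all_algebra.
From mathcomp Require Import all_classical all_reals all_analysis.
From mathcomp Require Import measurable_realfun ring lra.
Import Order.TTheory GRing.Theory Num.Theory.
Local Open Scope classical_set_scope.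
Local Open Scope ring_scope.

Section Helpers.
Variables (R : realType) (Phi : R -> R).
Hypothesis HPhi : orlicz_function Phi.

Lemma Phi_ge0 s : 0 <= Phi s.
Proof. by case: HPhi. Qed.

Lemma Phi_nd s s' : 0 <= s -> s <= s' -> Phi s <= Phi s'.
Proof.
case: HPhi => P0 Pc _ P00 _ s0 ss'.
have [s'0'|s'0] := eqVneq s' 0.
  by have -> : s = s' by apply/le_anti; rewrite ss' s'0' s0.
have s'p : 0 < s' by rewrite lt_neqAle eq_sym s'0 (le_trans s0 ss').
have H := Pc s' 0 (s / s').
rewrite mulr0 addr0 divfK ?gt_eqF // P00 mulr0 addr0 in H.
apply: le_trans (H _) _.
  by rewrite divr_ge0 ?(ltW s'p) //= ler_pdivrMr // mul1r.
rewrite -[leRHS]mul1r ler_wpM2r ?P0 // ler_pdivrMr // mul1r //.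
Qed.

Lemma Phi_abs s : Phi s = Phi `|s|.
Proof.
case: HPhi => _ _ Pe _ _.
by case: (ler0P s) => _ //; rewrite Pe.
Qed.

Lemma measurable_Phi d (T : measurableType d) (f : T -> R) :
  measurable_fun setT f -> measurable_fun setT (fun t => Phi (f t)).
Proof.
move=> mf.
pose h := fun s : R => Phi (Num.max s 0).
have hnd : nondecreasing_fun h.
  move=> a b ab; rewrite /h; apply: Phi_nd; first by rewrite le_max lexx orbT.
  by rewrite ge_max !le_max ab lexx /= orbT.
have mh : measurable_fun setT h by exact: nondecreasing_measurable.
have -> : (fun t => Phi (f t)) = h \o ((@Num.norm _ R) \o f).
  apply/funext => t /=; rewrite /h Phi_abs.
  by congr Phi; rewrite max_l // normr_ge0.
apply: measurableT_comp => //; apply: measurableT_comp => //.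
Qed.

End Helpers.

Lemma p_conv (R : realType) (p : R * R -> R) a u v :
  lattice_norm p -> 0 <= a -> a <= 1 ->
  p (1, a * u + (1 - a) * v) <= a * p (1, u) + (1 - a) * p (1, v).
Proof.
case=> _ Hh Ht _ a0 a1.
have E1 : p (a, a * u) = a * p (1, u).
  by have := Hh a (1, u); rewrite /= mulr1 ger0_norm.
have E2 : p (1 - a, (1 - a) * v) = (1 - a) * p (1, v).
  by have := Hh (1 - a) (1, v); rewrite /= mulr1 ger0_norm // subr_ge0.
have := Ht (a, a * u) (1 - a, (1 - a) * v).
by rewrite /= subrKC E1 E2.
Qed.

Lemma I_Phi_ge0 d (T : measurableType d) (R : realType)
  (mu : {measure set T -> \bar R}) (Phi : R -> R) (x : T -> R) :
  orlicz_function Phi -> (0 <= I_Phi mu Phi x)%E.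
Proof. by move=> HP; apply: integral_ge0 => t _; rewrite lee_fin Phi_ge0. Qed.

Lemma norm_lb d (T : measurableType d) (R : realType)
  (mu : {measure set T -> \bar R}) (Phi : R -> R) p (x : T -> R) (k : R) :
  0 < k -> (norm_Phi_p mu Phi p x <= (k^-1)%:E * p1E p (I_Phi mu Phi (fun t => (k * x t)%R)))%E.
Proof. by move=> k0; apply: ereal_inf_lbound; exists k. Qed.

Lemma attained (R : realType) (p : R * R -> R) (l : R) (I : \bar R) :
  0 < l -> 1%E = ((l^-1)%:E * p1E p I)%E -> exists r, I = r%:E /\ p (1, r) = l.
Proof.
move=> l0; case: I => [r| |] /=.
- move=> /esym/eqP; rewrite -EFinM eqe => /eqP H; exists r; split => //.
  by rewrite -(mulVKf (lt0r_neq0 l0) (p (1, r))) H mulr1.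
- by rewrite gt0_muley // lte_fin invr_gt0.
- by rewrite gt0_muley // lte_fin invr_gt0.
Qed.

Lemma mscale d (T : measurableType d) (R : realType) (k : R) (f : T -> R) :
  measurable_fun setT f -> measurable_fun setT (fun t => k * f t).
Proof. by move=> mf; apply: (@measurable_funM _ _ _ _ (cst k) f). Qed.

Lemma mEFin d (T : measurableType d) (R : realType) (f : T -> R) :
  measurable_fun setT f -> measurable_fun setT (fun t => (f t)%:E).
Proof. by move=> mf; exact/measurable_EFinP. Qed.

Theorem theorem5 (d : measure_display) (T : measurableType d) (R : realType)
  (mu : {measure set T -> \bar R})
  (mu_sfin : sigma_finite setT mu) (mu_complete : measure_is_complete mu)
  (p : R * R -> R) (Phi : R -> R) :
  lattice_norm p -> p (1, 0) = 1 ->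
  (forall u u' : R, 0 <= u -> u < u' -> p (1, u) < p (1, u')) ->
  orlicz_function Phi -> strictly_convex_fun Phi ->
  (forall x : T -> R, in_LPhi mu Phi x -> ~ {ae mu, forall t, x t = 0} ->
     exists l : R, 0 < l /\
       norm_Phi_p mu Phi p x = ((l^-1)%:E * p1E p (I_Phi mu Phi (fun t => (l * x t)%R)))%E) ->
  forall x y : T -> R, in_LPhi mu Phi x -> in_LPhi mu Phi y ->
    norm_Phi_p mu Phi p x = 1%E -> norm_Phi_p mu Phi p y = 1%E ->
    ~ {ae mu, forall t, x t = y t} ->
    (norm_Phi_p mu Phi p (fun t => ((x t + y t) / 2)%R) < 1)%E.
Proof.
move=> Hp p10 pinc HPhi Hsc Hatt x y Lx Ly nx ny nxy.
have mx := Lx.1; have my := Ly.1.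
have mPk : forall (k : R) (f : T -> R), measurable_fun setT f ->
    measurable_fun setT (fun t => (Phi (k * f t))%:E).
  move=> k f mf; apply: (@mEFin _ _ _ (fun t => Phi (k * f t))).
  by apply: measurable_Phi => //; exact: mscale.
have nz : forall z, measurable_fun setT z -> norm_Phi_p mu Phi p z = 1%E ->
    ~ {ae mu, forall t, z t = 0}.
  move=> z mz nz1 z0.
  have := @norm_lb _ _ _ mu Phi p z 2 (ltr0Sn R 1).
  have -> : I_Phi mu Phi (fun t => (2 * z t)%R) = 0%E.
    rewrite /I_Phi (ae_eq_integral (fun _ => 0%E)) //= ?integral0 //.
      all: try exact: mPk.
    move: z0; apply: filterS => t /= zt _.
    by rewrite zt mulr0; case: HPhi => _ _ _ -> _.
  rewrite nz1 /= p10 mule1 lee_fin.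
  by move=> H; lra.
have [k [k0 ek]] := Hatt x Lx (nz x mx nx).
have [l [l0 el]] := Hatt y Ly (nz y my ny).
move: (ek) (el); rewrite nx ny => /(@attained _ _ _ _ k0) [rx [Ix pk]] /(@attained _ _ _ _ l0) [ry [Iy pl]].
have [aeq|nae] := pselect {ae mu, forall t, (k * x t = l * y t)%R}.
  exfalso.
  have Ie : I_Phi mu Phi (fun t => (k * x t)%R) = I_Phi mu Phi (fun t => (l * y t)%R).
    rewrite /I_Phi; apply: ae_eq_integral => //; [exact: mPk|exact: mPk|].
    by move: aeq; apply: filterS => t /= -> _.
  have kl : k = l by rewrite -pk -pl; move: Ie; rewrite Ix Iy => -[->].
  apply: nxy; move: aeq; apply: filterS => t /=; rewrite kl.
  exact: (mulfI (lt0r_neq0 l0)).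
have c0 : 0 < k + l by rewrite addr_gt0.
have cn0 : k + l != 0 by rewrite gt_eqF.
set a := l / (k + l).
have a0 : 0 < a by rewrite divr_gt0.
have a1 : a < 1 by rewrite ltr_pdivrMr // mul1r ltrDr.
set M := 2 * k * l / (k + l).
have M0 : 0 < M by rewrite divr_gt0 // !mulr_gt0.
have eM : forall t, (M * ((x t + y t) / 2) = a * (k * x t) + (1 - a) * (l * y t))%R.
  by move=> t; rewrite /M /a; field.
have eaM : a * k + (1 - a) * l = M by rewrite /M /a; field.
pose F1 := fun t => Phi (k * x t).
pose F2 := fun t => Phi (l * y t).
pose G := fun t => Phi (M * ((x t + y t) / 2)).
pose g := fun t => a * F1 t + (1 - a) * F2 t - G t.
have Gle : forall t, G t <= a * F1 t + (1 - a) * F2 t.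
  move=> t; rewrite /G eM; case: HPhi => _ Hc _ _ _; apply: Hc.
  by rewrite (ltW a0) (ltW a1).
have g0 : forall t, 0 <= g t by move=> t; rewrite subr_ge0.
have mxy : measurable_fun setT (fun t => (x t + y t) / 2).
  by apply: (@measurable_funM _ _ _ _ (fun t => x t + y t) (cst (2^-1)));
    [exact: measurable_funD|exact: measurable_cst].
have mF1 : measurable_fun setT F1 by apply: measurable_Phi => //; exact: mscale.
have mF2 : measurable_fun setT F2 by apply: measurable_Phi => //; exact: mscale.
have mG : measurable_fun setT G by apply: measurable_Phi => //; exact: mscale.
have mg : measurable_fun setT g.
  apply: measurable_funB => //; apply: measurable_funD; exact: mscale.
have IF1 : (\int[mu]_t (F1 t)%:E = rx%:E)%E := Ix.
have IF2 : (\int[mu]_t (F2 t)%:E = ry%:E)%E := Iy.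
have Isum : (\int[mu]_t (G t)%:E + \int[mu]_t (g t)%:E = (a * rx + (1 - a) * ry)%:E)%E.
  rewrite -(@ge0_integralD _ _ _ mu setT measurableT (fun t => (G t)%:E) (fun t => (g t)%:E)); first last.
  - exact: mEFin.
  - by move=> t _; rewrite lee_fin.
  - exact: mEFin.
  - by move=> t _; rewrite lee_fin Phi_ge0.
  transitivity (\int[mu]_t ((a%:E * (F1 t)%:E) + ((1 - a)%:E * (F2 t)%:E)))%E.
    apply: eq_integral => t _; rewrite -!EFinM -EFinD; congr EFin; rewrite /g; ring.
  rewrite (@ge0_integralD _ _ _ mu setT measurableT (fun t => (a%:E * (F1 t)%:E)%E) (fun t => ((1 - a)%:E * (F2 t)%:E)%E)); first last.
  all: try (by move=> t _; rewrite -EFinM lee_fin mulr_ge0 // ?subr_ge0 ?(ltW a0) ?(ltW a1) // /F1 /F2 Phi_ge0).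
  all: try (by apply/measurable_EFinP; apply: mscale).
  rewrite (@ge0_integralZl_EFin _ _ _ mu setT measurableT (fun t => (F1 t)%:E)) ?(@ge0_integralZl_EFin _ _ _ mu setT measurableT (fun t => (F2 t)%:E)).
  all: try (by move=> t _; rewrite lee_fin Phi_ge0).
  all: try exact: mEFin.
  all: try (by rewrite ?subr_ge0 ltW).
  by rewrite IF1 IF2.
have Ig : (0 < \int[mu]_t (g t)%:E)%E.
  rewrite lt0e integral_ge0 ?andbT; last by move=> t _; rewrite lee_fin.
  apply/eqP => Ig0; apply: nae.
  have aeg : \forall t \ae mu, [set: T] t -> (g t)%:E = 0%E.
    apply/(ae_eq_integral_abs mu measurableT); first exact: mEFin.
    by rewrite -Ig0; apply: eq_integral => t _; rewrite gee0_abs // lee_fin.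
  move: aeg; apply: filterS => t /= /(_ I) [] gt0.
  case: (eqVneq (k * x t) (l * y t)) => // neq; exfalso.
  have := Hsc _ _ a neq; rewrite a0 a1 -eM => /(_ isT) H.
  by move: gt0; rewrite /g; apply/eqP; rewrite subr_eq0 gt_eqF.
have IG0 : (0 <= \int[mu]_t (G t)%:E)%E.
  by apply: integral_ge0 => t _; rewrite lee_fin Phi_ge0.
have [rG [IG rGlt]] : exists rG, (\int[mu]_t (G t)%:E = rG%:E)%E /\ rG < a * rx + (1 - a) * ry.
  move: (\int[mu]_t (G t)%:E)%E (\int[mu]_t (g t)%:E)%E Isum IG0 Ig => [rG| |] [rg| |] //=.
  move=> [<-] _; rewrite lte_fin => rg0; exists rG; split => //.
  by rewrite ltrDl.
have rG0 : 0 <= rG by rewrite -lee_fin -IG.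
have Mle := @norm_lb _ _ _ mu Phi p (fun t => ((x t + y t) / 2)%R) M M0.
apply: le_lt_trans Mle _.
have -> : I_Phi mu Phi (fun t => (M * ((x t + y t) / 2))%R) = rG%:E := IG.
rewrite /= -EFinM lte_fin mulrC ltr_pdivrMr // mul1r.
apply: lt_le_trans (pinc _ _ rG0 rGlt) _.
apply: le_trans (@p_conv _ p a rx ry Hp (ltW a0) (ltW a1)) _.
by rewrite pk pl eaM.
Qed.
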